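(* Let $c\geq 2$ be an integer such that $c+1$ is a prime power, and let $m\geq c+1$ be any prime power. Then there exists a $q$-ary $c$-frameproof code of length $c+2$ and cardinality $\frac{c+2}{c}(q-1)^2$, where $q=cm+1$.
   Context: For $P\subseteq F^l$ over a finite alphabet $F$, $desc(P)=\{x\in F^l: \text{for every } i\in\{1,\ldots,l\} \text{ there is } y\in P \text{ with } x_i=y_i\}$. For an integer $c\geq 2$, a $c$-frameproof code of length $l$ is a subset $C\subseteq F^l$ with $desc(P)\cap C=P$ for every $P\subseteq C$ with $|P|\leq c$; it is $q$-ary if $|F|=q$. *)

(* Defs.v *)
From mathcomp Require Import all_boot all_order.
Set Implicit Arguments. Unset Strict Implicit. Unset Printing Implicit Defensive.

Definition prime_power (n : nat) : Prop :=
  exists p k : nat, prime p /\ 0 < k /\ n = p ^ k.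


Definition desc (F : finType) (l : nat) (P : {set {ffun 'I_l -> F}})
  : {set {ffun 'I_l -> F}} :=
  [set x : {ffun 'I_l -> F} | [forall i : 'I_l, [exists y in P, x i == y i]]].

Definition frameproof (F : finType) (l c : nat) (C : {set {ffun 'I_l -> F}})
  : Prop :=
  forall P : {set {ffun 'I_l -> F}}, P \subset C -> #|P| <= c ->
    desc P :&: C = P.

(* Main.v *)
Require Import Defs.
From mathcomp Require Import all_boot all_order.
From mathcomp Require Import all_algebra all_field.
From mathcomp Require Import ring zify.
Set Implicit Arguments. Unset Strict Implicit. Unset Printing Implicit Defensive.
Import GRing.Theory.
Local Open Scope ring_scope.

Definition ev (K : fieldType) (ab : K * K) (t : option K) : K :=
  match t with Some t => ab.1 + ab.2 * t | None => ab.2 end.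

Lemma ev_zero2 (K : fieldType) (ab : K * K) t1 t2 :
  t1 != t2 -> ev ab t1 = 0 -> ev ab t2 = 0 -> ab = (0, 0).
Proof.
case: ab => a b; case: t1 => [t1|]; case: t2 => [t2|] //= ne.
- move=> h1 h2; have : b * (t1 - t2) = (a + b*t1) - (a + b*t2) by ring.
  rewrite h1 h2 subrr => /eqP; rewrite mulf_eq0 subr_eq0.
  have -> : (t1 == t2) = false by apply/negbTE; apply: contra ne => /eqP ->.
  rewrite orbF => /eqP bz; move: h1; rewrite bz mul0r addr0 => ->//.
- move=> h1 h2; move: h1; rewrite h2 mul0r addr0 => -> //.
- move=> h1 h2; move: h2; rewrite h1 mul0r addr0 => -> //.
Qed.

Lemma ev_eq2 (K : fieldType) (ab cd : K * K) t1 t2 :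
  t1 != t2 -> ev ab t1 = ev cd t1 -> ev ab t2 = ev cd t2 -> ab = cd.
Proof.
move=> ne h1 h2.
have E t : ev ab t - ev cd t = ev (ab.1 - cd.1, ab.2 - cd.2) t.
  by case: t => [t|] /=; ring.
have := ev_zero2 ne (etrans (esym (E t1)) (etrans (f_equal (fun x => x - ev cd t1) h1) (subrr _)))
   (etrans (esym (E t2)) (etrans (f_equal (fun x => x - ev cd t2) h2) (subrr _))).
case: ab cd {E h1 h2} => a b [c d] /= [] /eqP; rewrite subr_eq0 => /eqP -> /eqP.
by rewrite subr_eq0 => /eqP ->.
Qed.
Local Close Scope ring_scope.
Section Code.
Variables (G F : finFieldType) (c n : nat).
Variable pG : 'I_(c+2) -> option G.
Variable pF : 'I_(c+2) -> option F.
Variable e : option ({x : G | x != 0%R} * F) -> 'I_n.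
Hypothesis c_pos : 0 < c.
Hypotheses (pG_inj : injective pG) (pF_inj : injective pF) (e_inj : injective e).

Definition sym (g : G) (f : F) : option ({x : G | x != 0%R} * F) :=
  if insub g is Some s then Some (s, f) else None.

Lemma sym_eq g f g' f' : g != 0%R -> sym g f = sym g' f' -> g = g' /\ f = f'.
Proof.
rewrite /sym => gn0; rewrite (insubT (fun x => x != 0%R) gn0).
case: insubP => [s _ <-|] //; by case => <- ->.
Qed.

Definition word (p : (G * G) * (F * F)) : {ffun 'I_(c+2) -> 'I_n} :=
  [ffun k => e (sym (ev p.1 (pG k)) (ev p.2 (pF k)))].

Definition S : {set (G * G) * (F * F)} := setX [set~ (0%R, 0%R)] setT.
Definition Code := word @: S.

Definition Z (p : (G * G) * (F * F)) := [set k | ev p.1 (pG k) == 0%R].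

Lemma Z_le1 p : p \in S -> #|Z p| <= 1.
Proof.
rewrite !inE /= => /andP [pn0 _].
apply/card_le1_eqP => k1 k2; rewrite !inE => /eqP z1 /eqP z2.
apply/eqP; apply: contraR pn0 => ne; apply/eqP.
apply: (ev_zero2 _ z1 z2); apply: contra ne => /eqP /pG_inj ->//.
Qed.

Lemma key p p' k1 k2 : k1 != k2 -> k1 \notin Z p -> k2 \notin Z p ->
  word p k1 = word p' k1 -> word p k2 = word p' k2 -> p = p'.
Proof.
rewrite !inE !ffunE => ne n1 n2 /e_inj /(sym_eq n1) [g1 f1] /e_inj /(sym_eq n2) [g2 f2].
have nG : pG k1 != pG k2 by apply: contra ne => /eqP /pG_inj ->.
have nF : pF k1 != pF k2 by apply: contra ne => /eqP /pF_inj ->.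
move: (ev_eq2 nG g1 g2) (ev_eq2 nF f1 f2).
by case: p p' {g1 f1 g2 f2 n1 n2} => [ab cd] [ab' cd'] /= -> ->.
Qed.

Lemma two_out p : p \in S -> exists k1 k2, [/\ k1 != k2, k1 \notin Z p & k2 \notin Z p].
Proof.
move=> pS; have := Z_le1 pS; have := cardsC (Z p); rewrite card_ord => h hz.
have h2 : 1 < #|~: Z p|.
  move: h hz c_pos; set a := #|Z p|; set b := #|~: Z p|; lia.
have /card_gt0P [k1 k1in] : 0 < #|~: Z p| by apply: ltnW.
have : 0 < #|~: Z p :\ k1| by move: h2; rewrite (cardsD1 k1) k1in.
case/card_gt0P => k2; rewrite !inE => /andP [ne k2in].
exists k1, k2; split => //; first by rewrite eq_sym.
by rewrite inE in k1in.
by rewrite inE.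
Qed.

Lemma word_inj : {in S &, injective word}.
Proof.
move=> p p' pS _ eq; have [k1 [k2 [ne n1 n2]]] := two_out pS.
by apply: (key ne n1 n2); rewrite eq.
Qed.

Lemma card_Code : #|Code| = (#|G| * #|G|).-1 * (#|F| * #|F|).
Proof. by rewrite card_in_imset; [rewrite cardsX cardsC1 cardsT !card_prod | exact: word_inj]. Qed.

Lemma Code_fp : frameproof c Code.
Proof.
move=> P PC Pc; apply/setP => x; rewrite !inE.
case xP: (x \in P).
  rewrite (subsetP PC _ xP) andbT.
apply/forallP => i; apply/existsP; exists x; by rewrite xP eqxx.
apply/negP => /andP [/forallP dx /imsetP [p pS xe]].
pose f k := odflt x [pick y in P | x k == y k].
have fP k : f k \in P /\ x k = f k k.
  rewrite /f; case: pickP => [y /andP [yP /eqP ->] //|none].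
  have /existsP [y /andP [yP ey]] := dx k; by have := none y; rewrite yP ey.
have finj : {in ~: Z p &, injective f}.
  move=> k1 k2; rewrite !inE => n1 n2 fe; apply/eqP; apply: contraT => ne.
  have [yP e1] := fP k1; have [_ e2] := fP k2.
  have /imsetP [p' _ ye] := subsetP PC _ yP.
  have pp : p = p'.
    apply: (key ne); rewrite ?inE //.
      by rewrite -xe -ye.
    by rewrite -xe -ye fe.
  by move: xP; rewrite xe pp -ye yP.
have := card_in_imset finj.
have sub : (f @: ~: Z p) \subset P by apply/subsetP => y /imsetP [k _ ->]; exact: (fP k).1.
move/subset_leq_card: sub => le1 eqc.
have := cardsC (Z p); rewrite card_ord => h.
have := Z_le1 pS; move: le1 Pc; rewrite eqc; lia.
Qed.

End Code.

Lemma inj_into (T : finType) n (h : n <= #|T|) :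
  {f : 'I_n -> T | injective f}.
Proof.
exists (fun k => enum_val (widen_ord h k)) => a b /enum_val_inj /(congr1 val) /= /val_inj //.
Qed.

Lemma inj_from (T : finType) n (h : #|T| <= n) :
  {f : T -> 'I_n | injective f}.
Proof.
exists (fun t => widen_ord h (enum_rank t)) => a b /(congr1 val) /= /val_inj /enum_rank_inj //.
Qed.

Lemma ffield_of n : prime_power n -> exists K : finFieldType, #|K| = n.
Proof.
case=> p [k [pr [k0 ->]]].
have [K _ cK] := pPrimePowerField pr k0; by exists K.
Qed.

Theorem corollary2 (c m : nat) :
  2 <= c -> prime_power c.+1 -> prime_power m -> c.+1 <= m ->
  exists C : {set {ffun 'I_(c + 2) -> 'I_(c * m + 1)}},
    frameproof c C /\ #|C| * c = (c + 2) * (c * m + 1 - 1) ^ 2.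
Proof.
move=> c2 ppc ppm cm.
have [G cG] := ffield_of ppc; have [F cF] := ffield_of ppm.
have [pG pGi] := @inj_into (option G) (c + 2) ltac:(rewrite card_option cG addn2 //).
have [pF pFi] := @inj_into (option F) (c + 2) ltac:(rewrite card_option cF addn2 ltnS //).
pose T : finType := option ({x : G | x != 0%R} * F).
have cT : #|T| <= c * m + 1.
  rewrite card_option card_prod card_sig cF.
  have -> : #|[pred x : G | x != 0%R]| = c by rewrite -[c]/(c.+1.-1) -cG -(cardC1 (0%R : G)); apply: eq_card => x; rewrite !inE.
  by rewrite addn1.
have [e ei] := inj_from cT.
have c0 : 0 < c by apply: leq_trans c2.
exists (Code pG pF e); split; first exact: Code_fp.
rewrite card_Code // cG cF.
have -> : (c.+1 * c.+1).-1 = c * (c + 2) by rewrite -subn1; lia.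
rewrite addnK; lia.
Qed.
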